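(* If $v_{j1}^2+v_{j2}^2\neq0$ for $j=1$ or for $j=2$, then none of the points $[1,1,\sqrt{-1}]$, $[1,1,-\sqrt{-1}]$, $[1,-1,\sqrt{-1}]$, $[1,-1,-\sqrt{-1}]$ is a singular point of $V(\mathbf v,d)$.
   Context: Parameters $[\mathbf v,d]=[v_{11},v_{12},v_{21},v_{22},d]\in\mathbb{C}P^4$ (complex, not all zero). On $\mathbb{C}P^2$ with coordinates $[u_0,u_1,u_2]$, $V(\mathbf v,d)$ is the plane quartic $P=0$ where $P=2v_{22}u_0u_2(u_1^2+u_2^2)-2v_{12}u_1u_2(u_0^2+u_2^2)+v_{21}(u_2^2-u_0^2)(u_2^2+u_1^2)-v_{11}(u_2^2-u_1^2)(u_0^2+u_2^2)-d(u_1^2+u_2^2)(u_0^2+u_2^2)$. A point of $V$ is singular if all partial derivatives of $P$ vanish there. *)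

(* Defs.v *)
From HB Require Import structures.
From mathcomp Require Import all_boot all_order all_algebra.
From mathcomp Require Import mpoly.
Set Implicit Arguments. Unset Strict Implicit. Unset Printing Implicit Defensive.
Import Order.TTheory GRing.Theory Num.Theory.
Local Open Scope ring_scope.

(* Coordinates [u0,u1,u2] of CP^2 are the variables 'X_0, 'X_1, 'X_2 of
   {mpoly C[3]}. C is any numeric algebraically closed field (e.g. the complex
   numbers), 'i denotes sqrt(-1). *)

Definition u0 {C : numClosedFieldType} : {mpoly C[3]} := 'X_(0 : 'I_3).
Definition u1 {C : numClosedFieldType} : {mpoly C[3]} := 'X_(1 : 'I_3).
Definition u2 {C : numClosedFieldType} : {mpoly C[3]} := 'X_(2 : 'I_3).

Definition quarticP (C : numClosedFieldType) (v11 v12 v21 v22 d : C)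
  : {mpoly C[3]} :=
  (2 * v22)%:MP * u0 * u2 * (u1 ^+ 2 + u2 ^+ 2)
  - (2 * v12)%:MP * u1 * u2 * (u0 ^+ 2 + u2 ^+ 2)
  + v21%:MP * (u2 ^+ 2 - u0 ^+ 2) * (u2 ^+ 2 + u1 ^+ 2)
  - v11%:MP * (u2 ^+ 2 - u1 ^+ 2) * (u0 ^+ 2 + u2 ^+ 2)
  - d%:MP * (u1 ^+ 2 + u2 ^+ 2) * (u0 ^+ 2 + u2 ^+ 2).

Definition singular_point (C : numClosedFieldType) (p : {mpoly C[3]})
  (x : 'I_3 -> C) : Prop :=
  forall i : 'I_3, (mderiv i p).@[x] = 0.

Definition hpt (C : numClosedFieldType) (a b c : C) : 'I_3 -> C :=
  fun i => if val i == 0%N then a else if val i == 1%N then b else c.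

(* Main.v *)
Require Import Defs.
From HB Require Import structures.
From mathcomp Require Import all_boot all_order all_algebra.
From mathcomp Require Import mpoly.
From mathcomp Require Import ring.
Import Order.TTheory GRing.Theory Num.Theory.
Local Open Scope ring_scope.

Section S.
Variable C : numClosedFieldType.

Lemma dX (i j : 'I_3) (x : 'I_3 -> C) : (mderiv j ('X_i : {mpoly C[3]})).@[x] = (i == j)%:R.
Proof.
rewrite mderivX mevalZ mevalX mnm1E.
case: (eqVneq i j) => [->|ne]; last by rewrite mul0r.
rewrite mul1r big1 // => k _.
by rewrite mnmBE subnn expr0.
Qed.

Lemma Pdecomp (v11 v12 v21 v22 d : C) :
  quarticP v11 v12 v21 v22 d =
  ((2 * v22)%:MP * u0 * u2 + v21%:MP * (u2^+2 - u0^+2)) * (u1^+2 + u2^+2)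
  + (- (2 * v12)%:MP * u1 * u2 - v11%:MP * (u2 ^+ 2 - u1 ^+ 2)) * (u0^+2+u2^+2)
  - d%:MP * (u1 ^+ 2 + u2 ^+ 2) * (u0 ^+ 2 + u2 ^+ 2).
Proof. rewrite /quarticP; ring. Qed.


Lemma gen (F G A B E : {mpoly C[3]}) i x : A.@[x] = 0 -> B.@[x] = 0 ->
  (mderiv i (F * A + G * B - E * A * B)).@[x] =
  F.@[x] * (mderiv i A).@[x] + G.@[x] * (mderiv i B).@[x].
Proof.
move=> hA hB.
rewrite !mderivB !mderivD !mderivM !mevalB !mevalD !mevalM hA hB; ring.
Qed.

Lemma hpt0 (a b c : C) : hpt a b c 0 = a. Proof. by []. Qed.
Lemma hpt1 (a b c : C) : hpt a b c 1 = b. Proof. by []. Qed.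
Lemma hpt2 (a b c : C) : hpt a b c 2%R = c. Proof. by []. Qed.


Lemma main (v11 v12 v21 v22 d s t : C) : s ^+ 2 = 1 -> t ^+ 2 = -1 ->
  singular_point (quarticP v11 v12 v21 v22 d) (hpt 1 s t) ->
  v11 ^+ 2 + v12 ^+ 2 = 0 /\ v21 ^+ 2 + v22 ^+ 2 = 0.
Proof.
move=> hs ht H.
have hA : (u1 ^+ 2 + u2 ^+ 2 : {mpoly C[3]}).@[hpt 1 s t] = 0.
  by rewrite /u1 /u2 mevalD !rmorphXn /= !mevalXU /= hs ht subrr.
have hB : (u0 ^+ 2 + u2 ^+ 2 : {mpoly C[3]}).@[hpt 1 s t] = 0.
  by rewrite /u0 /u2 mevalD !rmorphXn /= !mevalXU /= ht expr1n subrr.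
have h0 := H 0; have h1 := H 1.
rewrite Pdecomp gen // in h0; rewrite Pdecomp gen // in h1.
move: h0 h1.
rewrite /u0 /u1 /u2 !expr2 !(mderivD, mderivM, mderivB, mderivN, mderivC, mevalD, mevalM, mevalB, mevalN, dX, mevalC, mevalXU) /=.
rewrite !hpt0 !hpt1 !hpt2 -[t * t]expr2 -[s * s]expr2 ht hs.
move=> h0 h1.
have e0 : (4 : C) * (v11 - v12 * s * t) = 0 by rewrite -h0; ring.
have e1 : (4 : C) * s * (v22 * t - v21) = 0 by rewrite -h1; ring.
have n4 : (4 : C) != 0 by rewrite pnatr_eq0.
have ns : s != 0 by apply/eqP => s0; move: hs; rewrite s0 expr0n /= => /eqP; rewrite eq_sym oner_eq0.
move/eqP: e0; move/eqP: e1; rewrite !mulf_eq0 (negPf n4) (negPf ns) /= !subr_eq0 => /eqP <- /eqP ->.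
split.
  by rewrite -[v12 * s * t * _]expr2 !exprMn hs ht; ring.
by rewrite -[v22 * t * _]expr2 !exprMn ht; ring.
Qed.

End S.


Theorem lemma6p6 (C : numClosedFieldType) (v11 v12 v21 v22 d : C) :
  (v11 ^+ 2 + v12 ^+ 2 != 0) \/ (v21 ^+ 2 + v22 ^+ 2 != 0) ->
  let V := quarticP v11 v12 v21 v22 d in
  [/\ ~ singular_point V (hpt 1 1 'i),
       ~ singular_point V (hpt 1 1 (- 'i)),
       ~ singular_point V (hpt 1 (-1) 'i)
     & ~ singular_point V (hpt 1 (-1) (- 'i))].
Proof.
move=> hv V.
have hi : ('i : C) ^+ 2 = -1 by rewrite sqrCi.
have hni : (- 'i : C) ^+ 2 = -1 by rewrite sqrrN sqrCi.
have h1 : (1 : C) ^+ 2 = 1 by rewrite expr1n.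
have hn1 : (-1 : C) ^+ 2 = 1 by rewrite sqrrN expr1n.
have K : forall s t : C, s ^+ 2 = 1 -> t ^+ 2 = -1 -> ~ singular_point V (hpt 1 s t).
  move=> s t hs ht /(@main C v11 v12 v21 v22 d s t hs ht) [e1 e2].
  by case: hv; rewrite ?e1 ?e2 eqxx.
by split; apply: K.
Qed.
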